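(* Fix $n\ge1$, $\Phi\in\mathbb{R}^{n\times n}$ and $c>0$. For every $T\ge1$ let $\tilde W(0),\dots,\tilde W(T-1)\in\mathbb{R}^{n\times n}$ satisfy $\|\tilde W(t)\|_2\le c$, and set $W(t)=I+\frac1T\tilde W(t)$. Then there exist real constants $\lambda_1\le\lambda_2$ and $y_1,y_2$ (independent of $T,\alpha,\beta$) such that for all $T$, all $\alpha\in(0,1]$ and all $\beta\in(1-\alpha,1]$, $$\Big\|\frac{dL_{\alpha T}}{du(\beta T)}\Big\|_F\ge (e^{\lambda_1}-y_1)e^{\lambda_1},\qquad \Big\|\frac{dL_{\alpha T}}{du(\beta T)}\Big\|_F\le (e^{\lambda_2}-y_2)e^{\lambda_2}.$$
   Context: Write $W^{s}=W(s-1)\cdots W(0)$ for $0\le s\le T$ ($W^0=I$). For a horizon $h\in\{1,\dots,T\}$ and block $t\in\{0,\dots,T-1\}$, the MPC gradient is $g_h(W(t))=\nabla_{W(t)}\frac12\|W^{\min(t+h,T)}-\Phi\|_F^2$. The notation $\frac{dL_{\alpha T}}{du(\beta T)}$ denotes $g_h(W(t))$ with $h=\lfloor\alpha T\rfloor$ and $t=\min(\lfloor\beta T\rfloor,T-1)$. $\|\cdot\|_F$ is the Frobenius norm, $\|\cdot\|_2$ the spectral norm. *)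

(* Defs.v *)
From HB Require Import structures.
From mathcomp Require Import all_boot all_order all_algebra.
From mathcomp Require Import all_classical all_reals all_analysis.
Set Implicit Arguments. Unset Strict Implicit. Unset Printing Implicit Defensive.
Import Order.TTheory GRing.Theory Num.Theory.
Import numFieldNormedType.Exports.
Local Open Scope classical_set_scope.
Local Open Scope ring_scope.

Section Defs.
Variable R : realType.

Definition frob (m k : nat) (A : 'M[R]_(m, k)) : R :=
  Num.sqrt (\sum_(i < m) \sum_(j < k) A i j ^+ 2).

Definition specnorm (n : nat) (A : 'M[R]_n) : R :=
  sup [set frob (A *m x) | x in [set x : 'cV[R]_n | frob x = 1]].

Fixpoint prodW (n : nat) (W : nat -> 'M[R]_n) (s : nat) : 'M[R]_n :=
  match s with
  | 0 => 1%:M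
  | s'.+1 => W s' *m prodW W s'
  end.

Definition upd (n : nat) (W : nat -> 'M[R]_n) (t : nat) (M : 'M[R]_n) :
  nat -> 'M[R]_n := fun k => if k == t then M else W k.

Definition grad_block (n : nat) (f : (nat -> 'M[R]_n) -> R)
  (W : nat -> 'M[R]_n) (t : nat) : 'M[R]_n :=
  \matrix_(i, j) derive1 (fun s : R => f (upd W t (W t + s *: delta_mx i j))) 0.

Definition lossW (n : nat) (Phi : 'M[R]_n) (m : nat) (W : nat -> 'M[R]_n) : R :=
  2^-1 * frob (prodW W m - Phi) ^+ 2.

Definition gMPC (n : nat) (W : nat -> 'M[R]_n) (Phi : 'M[R]_n) (T h t : nat)
  : 'M[R]_n := grad_block (lossW Phi (minn (t + h) T)) W t.

Definition Wfam (n : nat) (Wt : nat -> nat -> 'M[R]_n) (T : nat) :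
  nat -> 'M[R]_n := fun t => 1%:M + (T%:R)^-1 *: Wt T t.

Definition hidx (alpha : R) (T : nat) : nat := Num.truncn (alpha * T%:R).
Definition tidx (beta : R) (T : nat) : nat := minn (Num.truncn (beta * T%:R)) T.-1.

Definition dLdu (n : nat) (Wt : nat -> nat -> 'M[R]_n) (Phi : 'M[R]_n)
  (T : nat) (alpha beta : R) : 'M[R]_n :=
  gMPC (Wfam Wt T) Phi T (hidx alpha T) (tidx beta T).

End Defs.

(* Main.v *)
Require Import Defs.
From HB Require Import structures.
From mathcomp Require Import all_boot all_order all_algebra.
From mathcomp Require Import all_classical all_reals all_analysis.
From mathcomp Require Import ring lra.
Import Order.TTheory GRing.Theory Num.Theory.
Local Open Scope ring_scope.
Set Implicit Arguments. Unset Strict Implicit.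

Lemma dpoly (R : realType) (k a b c : R) :
  derive1 (fun s : R => k * (a + s * b + s ^+ 2 * c)) 0 = k * b.
Proof.
rewrite derive1E.
have -> : (fun s : R => k * (a + s * b + s ^+ 2 * c)) =
  (cst (k * a) + (cst (k * b) \* (@id R))) + (cst (k * c) \* ((@id R) \* (@id R))).
  apply/funext => s. rewrite !fctE /= expr2. ring.
rewrite derive_val.
by rewrite /= !scaler0 !addr0 add0r scale0r addr0 scaler0 addr0 /GRing.scale /= mulr1.
Qed.

Lemma sq_exp (R : realType) (x y z s : R) : (x + s * y - z) ^+ 2 =
  (x - z) ^+ 2 + s * (2 * ((x - z) * y)) + s ^+ 2 * y ^+ 2.
Proof. ring. Qed.

Section Aux.
Variable R : realType.

Lemma sum_ge_term (I : finType) (F : I -> R) k :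
  (forall i, 0 <= F i) -> F k <= \sum_i F i.
Proof. by move=> h; rewrite (bigD1 k) //= lerDl sumr_ge0. Qed.
Arguments sum_ge_term {I} F k.

Lemma frob_entry m k (A : 'M[R]_(m, k)) i j : `|A i j| <= frob A.
Proof.
rewrite /frob -sqrtr_sqr ler_sqrt; last first.
  by apply: sumr_ge0 => ? _; apply: sumr_ge0 => ? _; apply: sqr_ge0.
have h1 := sum_ge_term (fun i => \sum_j A i j ^+ 2) i.
have h2 := sum_ge_term (fun j => A i j ^+ 2) j.
apply: le_trans (h1 _); last by move=> ?; apply: sumr_ge0 => ? _; apply: sqr_ge0.
by apply: h2 => ?; apply: sqr_ge0.
Qed.

Lemma entry_le_abs m k (A : 'M[R]_(m, k)) i j :
  `|A i j| <= \sum_i \sum_j `|A i j|.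
Proof.
have h1 := sum_ge_term (fun i => \sum_j `|A i j|) i.
have h2 := sum_ge_term (fun j => `|A i j|) j.
apply: le_trans (h1 _); last by move=> ?; apply: sumr_ge0.
by apply: h2.
Qed.

Lemma frob_le_abs m k (A : 'M[R]_(m, k)) : frob A <= \sum_i \sum_j `|A i j|.
Proof.
set Q := \sum_i \sum_j `|A i j|.
have Q0 : 0 <= Q by apply: sumr_ge0 => ? _; apply: sumr_ge0.
rewrite /frob -(ger0_norm Q0) -sqrtr_sqr ler_sqrt ?sqr_ge0 // expr2.
rewrite {2}/Q mulr_sumr; apply: ler_sum => i _.
rewrite mulr_sumr; apply: ler_sum => j _.
rewrite -real_normK ?num_real // expr2 mulrC; apply: ler_wpM2r => //.
exact: entry_le_abs.
Qed.

Lemma frob_ge0 m k (A : 'M[R]_(m, k)) : 0 <= frob A.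
Proof. exact: sqrtr_ge0. Qed.

Variable n : nat.

Definition rowb (A : 'M[R]_n) (K : R) := forall i : 'I_n, \sum_j `|A i j| <= K.

Lemma rowb_entry A K i j : rowb A K -> `|A i j| <= K.
Proof. by move=> h; apply: le_trans (h i); apply: (sum_ge_term (fun j => `|A i j|) j). Qed.

Lemma rowb_le A a b : a <= b -> rowb A a -> rowb A b.
Proof. by move=> hab h i; apply: le_trans (h i) hab. Qed.

Lemma rowb_mul A B a b : 0 <= b -> rowb A a -> rowb B b -> rowb (A *m B) (a * b).
Proof.
move=> b0 hA hB i.
apply: le_trans (_ : \sum_j \sum_k `|A i k| * `|B k j| <= _).
  apply: ler_sum => j _; rewrite mxE; apply: le_trans (ler_norm_sum _ _ _) _.
  by apply: ler_sum => k _; rewrite normrM.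
rewrite exchange_big /=.
apply: le_trans (_ : \sum_k `|A i k| * b <= _).
  by apply: ler_sum => k _; rewrite -mulr_sumr; apply: ler_wpM2l.
by rewrite -mulr_suml; apply: ler_wpM2r.
Qed.

Lemma rowb_add A B a b : rowb A a -> rowb B b -> rowb (A + B) (a + b).
Proof.
move=> hA hB i; apply: le_trans (_ : \sum_j (`|A i j| + `|B i j|) <= _).
  by apply: ler_sum => j _; rewrite mxE; apply: ler_normD.
by rewrite big_split /=; apply: lerD.
Qed.

Lemma rowb_sub A B a b : rowb A a -> rowb B b -> rowb (A - B) (a + b).
Proof.
move=> hA hB i; apply: le_trans (_ : \sum_j (`|A i j| + `|B i j|) <= _).
  by apply: ler_sum => j _; rewrite !mxE; apply: ler_normB.
by rewrite big_split /=; apply: lerD.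
Qed.

Lemma rowb_scale k A a : rowb A a -> rowb (k *: A) (`|k| * a).
Proof.
move=> hA i; under eq_bigr do rewrite mxE normrM.
by rewrite -mulr_sumr; apply: ler_wpM2l.
Qed.

Lemma rowb_one : rowb 1%:M 1.
Proof.
move=> i; rewrite (bigD1 i) //= big1 => [|j hj].
  by rewrite mxE eqxx mulr1n normr1 addr0.
by rewrite mxE eq_sym (negbTE hj) mulr0n normr0.
Qed.

Lemma rowb_delta i0 j0 : rowb (delta_mx i0 j0) 1.
Proof.
move=> i; rewrite (bigD1 j0) //= big1 => [|j hj].
  by rewrite mxE eqxx andbT addr0; case: (i == i0); rewrite ?normr1 ?normr0.
by rewrite mxE (negbTE hj) andbF normr0.
Qed.

Lemma spec_entry (A : 'M[R]_n) i j : `|A i j| <= specnorm A.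
Proof.
have hx : frob (delta_mx j 0 : 'cV[R]_n) = 1.
  rewrite /frob (bigD1 j) //= big_ord1 big1 => [|k hk].
    by rewrite mxE !eqxx expr1n addr0 sqrtr1.
  by rewrite big_ord1 mxE (negbTE hk) expr0n.
apply: le_trans (_ : frob (A *m delta_mx j (0 : 'I_1)) <= _).
  apply: le_trans (frob_entry (A *m (delta_mx j (0 : 'I_1))) i (0 : 'I_1)).
  by rewrite -colE mxE.
rewrite /specnorm.
match goal with |- context [@sup _ ?S] => have hub : has_ubound S end.
  exists (\sum_i \sum_(j < 1) \sum_k `|A i k|) => y [x hx1 <-].
  apply: le_trans (frob_le_abs _) _.
  apply: ler_sum => i' _; apply: ler_sum => j' _.
  rewrite mxE; apply: le_trans (ler_norm_sum _ _ _) _.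
  apply: ler_sum => k _; rewrite normrM -[X in _ <= X]mulr1; apply: ler_wpM2l => //.
  by rewrite -hx1; apply: frob_entry.
apply: (ub_le_sup hub).
by exists (delta_mx j 0).
Qed.

End Aux.

Section Prod.
Variable R : realType.
Variable n : nat.

Fixpoint pr (W : nat -> 'M[R]_n) (a k : nat) : 'M[R]_n :=
  match k with 0 => 1%:M | k'.+1 => W (a + k')%N *m pr W a k' end.

Lemma prodW_split (W : nat -> 'M[R]_n) a k : prodW W (a + k) = pr W a k *m prodW W a.
Proof.
elim: k => [|k IH]; first by rewrite addn0 /= mul1mx.
by rewrite addnS /= IH mulmxA.
Qed.

Lemma prodW_pr (W : nat -> 'M[R]_n) k : prodW W k = pr W 0 k.
Proof. elim: k => [|k IH]; first by []. by rewrite /= IH add0n. Qed.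

Lemma prodW_upd_low (W : nat -> 'M[R]_n) t X s : (s <= t)%N -> prodW (upd W t X) s = prodW W s.
Proof.
elim: s => [|s IH] hs; first by [].
rewrite /= IH; last exact: ltnW.
by rewrite /upd (ltn_eqF hs).
Qed.

Lemma pr_upd (W : nat -> 'M[R]_n) t X a k : (t < a)%N -> pr (upd W t X) a k = pr W a k.
Proof.
move=> ha; elim: k => [|k IH]; first by [].
have hk : (t < a + k)%N by apply: (leq_trans ha); rewrite leq_addr.
by rewrite /= IH /upd (gtn_eqF hk).
Qed.

Lemma prodW_upd (W : nat -> 'M[R]_n) t X m : (t < m)%N ->
  prodW (upd W t X) m = pr W t.+1 (m - t.+1) *m X *m prodW W t.
Proof.
move=> h; rewrite -{1}(subnKC h) prodW_split pr_upd; last exact: ltnSn.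
rewrite /= prodW_upd_low; last exact: leqnn.
by rewrite /upd eqxx mulmxA.
Qed.

Lemma rowb_pr (W : nat -> 'M[R]_n) q a k : 0 <= q ->
  (forall s, (a <= s)%N -> (s < a + k)%N -> rowb (W s) q) ->
  rowb (pr W a k) (q ^+ k).
Proof.
move=> hq; elim: k => [|k IH] hW /=; first by rewrite expr0; apply: rowb_one.
rewrite exprS; apply: rowb_mul; first exact: exprn_ge0.
  by apply: hW; [rewrite leq_addr | rewrite ltn_add2l].
apply: IH => s h1 h2; apply: hW => //.
by rewrite addnS ltnS ltnW.
Qed.

Lemma sumsq_expand (P N Phi : 'M[R]_n) (s : R) :
  \sum_k \sum_l (P + s *: N - Phi) k l ^+ 2 =
  \sum_k \sum_l (P - Phi) k l ^+ 2 + s * (2 * \sum_k \sum_l ((P - Phi) k l * N k l))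
        + s ^+ 2 * \sum_k \sum_l N k l ^+ 2.
Proof.
rewrite !mulr_sumr -!big_split /=; apply: eq_bigr => k _.
rewrite !mulr_sumr -!big_split /=; apply: eq_bigr => l _.
by rewrite !mxE sq_exp.
Qed.

Lemma sum2_const (x : R) : \sum_(k < n) \sum_(l < n) x = n%:R * n%:R * x.
Proof. by rewrite !sumr_const !card_ord -[x *+ n *+ n]mulr_natl -[x *+ n]mulr_natl mulrA. Qed.

Lemma grad_entry_bound (M N : 'M[R]_n) (a b : R) : rowb M a -> rowb N b ->
  `|2^-1 * (2 * \sum_k \sum_l (M k l * N k l))| <= n%:R * n%:R * (a * b).
Proof.
move=> hM hN.
rewrite mulKf; last by rewrite pnatr_eq0.
rewrite -sum2_const.
apply: le_trans (ler_norm_sum _ _ _) _; apply: ler_sum => k _.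
apply: le_trans (ler_norm_sum _ _ _) _; apply: ler_sum => l _.
rewrite normrM; apply: ler_pM; [exact: normr_ge0 | exact: normr_ge0 | |].
  exact: rowb_entry hM.
exact: rowb_entry hN.
Qed.

Lemma frob_bound (G : 'M[R]_n) (Y : R) : (forall i j, `|G i j| <= Y) ->
  frob G <= n%:R * n%:R * Y.
Proof.
move=> hG; apply: le_trans (frob_le_abs _) _.
rewrite -sum2_const.
by apply: ler_sum => k _; apply: ler_sum => l _; apply: hG.
Qed.

End Prod.

Unset Implicit Arguments.

Theorem lemma3 (R : realType) (n : nat) (hn : (0 < n)%N) (Phi : 'M[R]_n)
  (c : R) (hc : 0 < c) (Wt : nat -> nat -> 'M[R]_n)
  (hWt : forall T t : nat, (0 < T)%N -> (t < T)%N -> specnorm (Wt T t) <= c) :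
  exists l1 l2 y1 y2 : R, l1 <= l2 /\
    forall (T : nat) (alpha beta : R), (0 < T)%N ->
      0 < alpha <= 1 -> 1 - alpha < beta <= 1 ->
      (expR l1 - y1) * expR l1 <= frob (dLdu Wt Phi T alpha beta) /\
      frob (dLdu Wt Phi T alpha beta) <= (expR l2 - y2) * expR l2.
Proof.
set F := \sum_i \sum_j `|Phi i j|.
set E := expR (n%:R * c).
set X := (E + F) * (E * E).
set B := n%:R * n%:R * (n%:R * n%:R * X).
exists 0, 0, 1, (1 - B); split => //.
move=> T alpha beta hT ha hb.
rewrite expR0 subrr mul0r (_ : (1 - (1 - B)) * 1 = B); last by ring.
split; first exact: frob_ge0.
rewrite /dLdu /gMPC.
set W := Wfam Wt T.
set t := tidx beta T.
set m := minn (t + hidx alpha T) T.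
have htT : (t < T)%N.
  rewrite /t /tidx; apply: leq_ltn_trans (geq_minr _ _) _.
  by rewrite prednK.
have hmT : (m <= T)%N by rewrite /m geq_minr.
set q := 1 + T%:R^-1 * (n%:R * c).
have hq1 : 1 <= q.
  by rewrite /q lerDl mulr_ge0 // ?invr_ge0 ?mulr_ge0 ?ler0n // ltW.
have hq0 : 0 <= q by apply: le_trans hq1.
have hW : forall s, (s < T)%N -> rowb (W s) q.
  move=> s hs; rewrite /W /Wfam; apply: rowb_add; first exact: rowb_one.
  have hWs : rowb (Wt T s) (n%:R * c).
    move=> i; apply: le_trans (_ : \sum_(j < n) c <= _).
      by apply: ler_sum => j _; apply: le_trans (spec_entry _ i j) (hWt _ _ hT hs).
    by rewrite sumr_const card_ord mulr_natl.
  by have := rowb_scale (T%:R^-1) hWs; rewrite ger0_norm ?invr_ge0 ?ler0n.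
have hqE : forall k, (k <= T)%N -> q ^+ k <= E.
  move=> k hk; apply: le_trans (ler_weXn2l hq1 hk) _.
  apply: le_trans (_ : expR (T%:R^-1 * (n%:R * c)) ^+ T <= _).
    by apply: lerXn2r; rewrite ?nnegrE ?expR_ge0 ?expR_ge1Dx.
  rewrite -expRM_natl mulrA mulfV ?mul1r //.
  by rewrite pnatr_eq0 -lt0n.
have hE0 : 0 <= E by apply: expR_ge0.
have hPb : rowb (prodW W t) E.
  rewrite prodW_pr; apply: rowb_le (hqE t (ltnW htT)) _.
  apply: rowb_pr => // s _ h2; apply: hW; apply: leq_trans h2 _.
  by rewrite add0n ltnW.
have hPm : rowb (prodW W m) E.
  rewrite prodW_pr; apply: rowb_le (hqE m hmT) _.
  apply: rowb_pr => // s _ h2; apply: hW; apply: leq_trans h2 _.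
  by rewrite add0n.
have hN : forall i j, exists N, rowb N (E * E) /\ forall s : R,
    prodW (upd W t (W t + s *: delta_mx i j)) m = prodW W m + s *: N.
  move=> i j; case: (ltnP t m) => htm.
    exists (pr W t.+1 (m - t.+1) *m delta_mx i j *m prodW W t); split.
      rewrite -[X in rowb _ (X * _)]mulr1; apply: rowb_mul => //.
      apply: rowb_mul => //; last exact: rowb_delta.
      apply: rowb_le (hqE (m - t.+1)%N _) _; first by apply: leq_trans (leq_subr _ _) hmT.
      apply: rowb_pr => // s _ h2; apply: hW; apply: leq_trans h2 _.
      by rewrite subnKC.
    move=> s; rewrite prodW_upd; last exact: htm.
    have -> : prodW W m = pr W t.+1 (m - t.+1) *m W t *m prodW W t.
      by rewrite -{1}(subnKC htm) prodW_split /= mulmxA.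
    by rewrite mulmxDr mulmxDl -scalemxAr -scalemxAl.
  exists 0; split.
    by move=> i'; rewrite big1 ?mulr_ge0 // => k _; rewrite mxE normr0.
  by move=> s; rewrite prodW_upd_low; [rewrite scaler0 addr0 | exact: htm].
have hPhi : rowb Phi F.
  move=> i; have h := @sum_ge_term _ _ (fun i => \sum_j `|Phi i j|) i.
  by apply: h => ? ; apply: sumr_ge0.
have hM : rowb (prodW W m - Phi) (E + F) by apply: rowb_sub.
set G := grad_block _ _ _.
have hG : forall i j, `|G i j| <= n%:R * n%:R * X.
  move=> i j; rewrite /G /grad_block mxE.
  case: (hN i j) => N [hNb hNe].
  set M := prodW W m - Phi.
  have -> : (fun s => lossW Phi m (upd W t (W t + s *: delta_mx i j))) =
     (fun s => 2^-1 * (\sum_k \sum_l M k l ^+ 2 + s * (2 * \sum_k \sum_l (M k l * N k l))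
        + s ^+ 2 * \sum_k \sum_l N k l ^+ 2)).
    apply/funext => s; rewrite /lossW hNe /frob sqr_sqrtr; last first.
      by apply: sumr_ge0 => ? _; apply: sumr_ge0 => ? _; apply: sqr_ge0.
    congr (_ * _); exact: sumsq_expand.
  rewrite dpoly; exact: grad_entry_bound hM hNb.
apply: frob_bound => i j; exact: hG.
Qed.
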